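(* Consider a binary node classification problem on a graph in which every node has exactly $d$ neighbours (self-loops having been added), node labels lie in $\{0,1\}$, and, given that a center node has label $c\in\{0,1\}$, each of its neighbours has the same label $c$ with probability $P_c\in[0,1]$. Let $X_0, X_1$ be independent random feature vectors in $\mathbb{R}^{\iota}$ distributed as the node features of class $0$ and class $1$, with means $\mu_{X_0},\mu_{X_1}$. Consider a one-layer GCN without non-linear activation, with kernel $W\neq 0$, so that the output representation of a node of class $0$ is $O_0=W\big(P_0X_0+(1-P_0)X_1\big)$ and that of a node of class $1$ is $O_1=W\big(P_1X_1+(1-P_1)X_0\big)$. Put $\sigma_c^2=\mathbb{E}\|W(X_c-\mu_{X_c})\|^2$ for $c=0,1$, and assume $\sigma_0>0$ and $\sigma_1>0$. Define $S_c=\big(\mathbb{E}\|O_c-\mathbb{E}O_c\|^2\big)^{1/2}$ for $c=0,1$, $M_{0,1}=\|\mathbb{E}O_0-\mathbb{E}O_1\|$, and the complexity measure $\mathcal{C}=(S_0+S_1)/M_{0,1}$ (with $\mathcal{C}=+\infty$ if $M_{0,1}=0$). Then $\mathcal{C}\to+\infty$ as $|P_0+P_1-1|\to 0$.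
   Context: The complexity measure is the ''Consistency of Representations'' measure based on the Davies–Bouldin index with $p=2$ and $k=2$ classes: for classes $i,j$, $S_i$ is the root-mean-square distance of class-$i$ output representations to their centroid $\mu_{\mathcal{O}_i}$, $M_{i,j}=\|\mu_{\mathcal{O}_i}-\mu_{\mathcal{O}_j}\|_2$, and $\mathcal{C}=\frac{1}{k}\sum_i\max_{j\neq i}\frac{S_i+S_j}{M_{i,j}}$, which for $k=2$ equals $(S_0+S_1)/M_{0,1}$. A larger $\mathcal{C}$ is interpreted as worse generalization. The GCN layer (with mean aggregation over the $d$ neighbours including the self-loop) has output $W\sum_{j\in\mathcal{N}(v_i)}\frac{1}{d}x_j$; the paper models its output for a class-$c$ node as stated in the claim. *)

(* Defs.v *)
From HB Require Import structures.
From mathcomp Require Import all_boot all_order all_algebra.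
From mathcomp Require Import all_classical all_reals all_analysis.
Set Implicit Arguments. Unset Strict Implicit. Unset Printing Implicit Defensive.
Import Order.TTheory GRing.Theory Num.Theory.
Local Open Scope ring_scope.
Local Open Scope classical_set_scope.

Section GCNDefs.
Context {R : realType} {d : measure_display} {T : measurableType d}.

Definition enorm (n : nat) (v : 'cV[R]_n) : R := Num.sqrt (\sum_(i < n) v i ord0 ^+ 2).

(* componentwise expectation of a random vector (assumed integrable) *)
Definition Evec (P : probability T R) (n : nat) (X : T -> 'cV[R]_n) : 'cV[R]_n :=
  \col_i fine (expectation P (fun t => X t i ord0)).

Definition rvec (n : nat) (X : T -> 'cV[R]_n) : Prop :=
  forall i : 'I_n, measurable_fun setT (fun t => X t i ord0).

Definition L2vec (P : probability T R) (n : nat) (X : T -> 'cV[R]_n) : Prop :=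
  forall i : 'I_n, P.-integrable setT (fun t => ((X t i ord0) ^+ 2)%:E).

(* independence of two random vectors: the joint law factorizes on all
   measurable rectangles of R^n (a pi-system generating the Borel sets of R^n) *)
Definition indep_vec (P : probability T R) (n : nat) (X Y : T -> 'cV[R]_n) : Prop :=
  forall A B : 'I_n -> set R, (forall i, measurable (A i)) -> (forall i, measurable (B i)) ->
    P ([set t | forall i, A i (X t i ord0)] `&` [set t | forall i, B i (Y t i ord0)]) =
    (P [set t | forall i, A i (X t i ord0)] * P [set t | forall i, B i (Y t i ord0)])%E.

Definition var_norm (P : probability T R) (n : nat) (Z : T -> 'cV[R]_n) : R :=
  fine (expectation P (fun t => enorm (Z t - Evec P Z) ^+ 2)).

Definition O0 (k n : nat) (W : 'M[R]_(k, n)) (X0 X1 : T -> 'cV[R]_n) (P0 : R) :=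
  fun t => W *m (P0 *: X0 t + (1 - P0) *: X1 t).
Definition O1 (k n : nat) (W : 'M[R]_(k, n)) (X0 X1 : T -> 'cV[R]_n) (P1 : R) :=
  fun t => W *m (P1 *: X1 t + (1 - P1) *: X0 t).

Definition S_c (P : probability T R) (k : nat) (O : T -> 'cV[R]_k) : R :=
  Num.sqrt (var_norm P O).
Definition M01 (P : probability T R) (k : nat) (Oa Ob : T -> 'cV[R]_k) : R :=
  enorm (Evec P Oa - Evec P Ob).
Definition complexity (P : probability T R) (k n : nat) (W : 'M[R]_(k, n))
  (X0 X1 : T -> 'cV[R]_n) (P0 P1 : R) : \bar R :=
  let Oa := O0 W X0 X1 P0 in let Ob := O1 W X0 X1 P1 in
  if M01 P Oa Ob == 0 then +oo%E
  else ((S_c P Oa + S_c P Ob) / M01 P Oa Ob)%:E.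

End GCNDefs.

(* Main.v *)
Require Import Defs.
From HB Require Import structures.
From mathcomp Require Import all_boot all_order all_algebra.
From mathcomp Require Import all_classical all_reals all_analysis.
From mathcomp Require Import measurable_realfun.
From mathcomp Require Import ring lra.
Import Order.TTheory GRing.Theory Num.Theory.
Local Open Scope ring_scope.
Local Open Scope classical_set_scope.
Set Implicit Arguments. Unset Strict Implicit.

Lemma dist_int d (T : measurableType d) (R : realType) (P : probability T R) (F : {mfun T >-> R}) :
  P.-integrable setT (EFin \o F) ->
  (distribution P F).-integrable setT (fun y : R => y%:E) /\
  (\int[distribution P F]_y y%:E = \int[P]_x (F x)%:E)%E.
Proof.
move=> IF; have mE : measurable_fun [set: R] (@EFin R) by apply/measurable_EFinP; exact: measurable_id.
split; last by rewrite integral_distribution.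
apply/integrableP; split => //.
rewrite ge0_integral_distribution //; last by apply: measurableT_comp.
by case/integrableP: IF.
Qed.

Lemma indep_mul d (T : measurableType d) (R : realType) (P : probability T R) (f g : T -> R) :
  measurable_fun setT f -> measurable_fun setT g ->
  (forall A B, measurable A -> measurable B ->
     P (f @^-1` A `&` g @^-1` B) = (P (f @^-1` A) * P (g @^-1` B))%E) ->
  P.-integrable setT (EFin \o f) -> P.-integrable setT (EFin \o g) ->
  P.-integrable setT (EFin \o (f \* g)) ->
  (\int[P]_x (f x * g x)%:E = \int[P]_x (f x)%:E * \int[P]_x (g x)%:E)%E.
Proof.
move=> mf mg ind If Ig Ifg.
pose F : {mfun T >-> R} := HB.pack f (isMeasurableFun.Build _ _ _ _ f mf).
pose G : {mfun T >-> R} := HB.pack g (isMeasurableFun.Build _ _ _ _ g mg).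
have mphi : measurable_fun setT (fun t => (f t, g t)) by exact: measurable_fun_pair.
pose Phi : {mfun T >-> (R * R)%type} := HB.pack (fun t => (f t, g t)) (isMeasurableFun.Build _ _ _ _ _ mphi).
pose m1 := distribution P F.
pose m2 := distribution P G.
pose m' := distribution P Phi.
have E : forall X, measurable X -> (m1 \x m2)%E X = m' X.
  apply: product_measure_unique => A B mA mB.
  exact: ind.
pose k := fun z : R * R => (z.1 * z.2)%:E.
have mk : measurable_fun setT k.
  apply/measurable_EFinP; apply: measurable_funM; [exact: measurable_fst | exact: measurable_snd].
have Ik : (m1 \x m2)%E.-integrable setT k.
  apply/integrableP; split => //.
  rewrite (eq_measure_integral m'); last by move=> A mA _; first [exact: E | exact/esym/E].
  rewrite ge0_integral_distribution //.
  - by case/integrableP: Ifg.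
  - by apply: measurableT_comp => //; exact: measurable_abse.
have [I1 E1] := @dist_int _ _ _ P F If.
have [I2 E2] := @dist_int _ _ _ P G Ig.
have -> : (\int[P]_x (f x * g x)%:E = \int[m1 \x m2]_z k z)%E.
  rewrite (eq_measure_integral m'); last by move=> A mA _; first [exact: E | exact/esym/E].
  by rewrite integral_distribution.
rewrite -integral12_prod_meas1 //.
rewrite /fubini_F /k /=.
have fin2 : (\int[m2]_y y%:E)%E \is a fin_num by apply: integrable_fin_num.
under eq_integral => x _ do (under eq_integral => y _ do rewrite EFinM;
   rewrite integralZl //).
rewrite -(fineK fin2) integralZr // fineK // -E1 -E2 //.
Qed.

Section L.
Context d (T : measurableType d) (R : realType) (P : probability T R).

Lemma L2_Lfun (f : T -> R) : measurable_fun setT f ->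
  P.-integrable setT (fun t => (f t ^+ 2)%:E) -> f \in Lfun P 2%:E.
Proof.
move=> mf If2; rewrite inE; apply/andP; split; first by rewrite inE.
rewrite inE /= /finite_norm unlock /=.
apply: poweR_lty.
case/integrableP: If2 => _; apply: le_lt_trans.
rewrite le_eqVlt; apply/orP; left; apply/eqP; apply: eq_integral => x _.
by rewrite /= powR_mulrn // -normrX ger0_norm ?sqr_ge0 // ger0_norm ?sqr_ge0.
Qed.

Lemma L2_sub (f g : T -> R) : f \in Lfun P 2%:E -> g \in Lfun P 2%:E -> f - g \in Lfun P 2%:E.
Proof. move=> hf hg.
have := (@Lfun_submod_closed _ _ _ P 2%:E (lee1n 2)).2 1 f (- g) hf.
rewrite scale1r; apply.
have := (@Lfun_submod_closed _ _ _ P 2%:E (lee1n 2)).2 (-1) g 0 hg.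
rewrite addr0 scaleN1r; apply.
exact: (@Lfun_submod_closed _ _ _ P 2%:E (lee1n 2)).1.
Qed.

Definition Rexp (f : T -> R) := fine (expectation P f).
Definition L1 (f : T -> R) := f \in Lfun P 1.

Lemma L1D f g : L1 f -> L1 g -> L1 (fun t => f t + g t).
Proof.
move=> hf hg; have -> : (fun t => f t + g t) = f + g by apply/funext.
exact: rpredD.
Qed.

Lemma L1Z c f : L1 f -> L1 (fun t => c * f t).
Proof.
move=> hf; have -> : (fun t => c * f t) = c *: f by apply/funext.
exact: rpredZ.
Qed.

Lemma RexpD f g : L1 f -> L1 g -> Rexp (fun t => f t + g t) = Rexp f + Rexp g.
Proof.
move=> hf hg; rewrite /Rexp.
have -> : (fun t => f t + g t) = (f \+ g)%R by [].
by rewrite expectationD // fineD // expectation_fin_num.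
Qed.

Lemma RexpZ c f : L1 f -> Rexp (fun t => c * f t) = c * Rexp f.
Proof.
move=> hf; rewrite /Rexp.
have -> : (fun t => c * f t) = (c \o* f)%R by apply/funext => t; rewrite /= mulrC.
by rewrite expectationZl // fineM // expectation_fin_num.
Qed.

Lemma Rexp_cst c : Rexp (fun _ => c) = c.
Proof. by rewrite /Rexp; change (fine (expectation P (cst c)) = c); rewrite expectation_cst. Qed.

Lemma Rexp_sum (I : finType) (F : I -> T -> R) : (forall i, L1 (F i)) ->
  L1 (fun t => \sum_i F i t) /\ Rexp (fun t => \sum_i F i t) = \sum_i Rexp (F i).
Proof.
move=> HF.
have -> : (fun t => \sum_i F i t) = \sum_i F i by rewrite fct_sumE.
apply: (big_ind2 (fun f r => L1 f /\ Rexp f = r)).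
- split; first exact: rpred0.
  by rewrite -[0]/(cst 0 : T -> R) -[RHS](Rexp_cst 0).
- move=> f1 r1 f2 r2 [h1 e1] [h2 e2]; split; first exact: rpredD.
  by rewrite -e1 -e2 -RexpD.
- by move=> i _; split.
Qed.

Lemma Rexp_dsum (n : nat) (c : 'I_n -> 'I_n -> R) (F : 'I_n -> 'I_n -> T -> R) :
  (forall i j, L1 (F i j)) ->
  L1 (fun t => \sum_i \sum_j c i j * F i j t) /\
  Rexp (fun t => \sum_i \sum_j c i j * F i j t) = \sum_i \sum_j c i j * Rexp (F i j).
Proof.
move=> HF.
have H1 : forall i, L1 (fun t => \sum_j c i j * F i j t) /\
   Rexp (fun t => \sum_j c i j * F i j t) = \sum_j c i j * Rexp (F i j).
  move=> i; have [h e] := @Rexp_sum _ (fun j t => c i j * F i j t) (fun j => @L1Z (c i j) _ (HF i j)).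
  split => //; rewrite e; apply: eq_bigr => j _; exact: RexpZ.
have [h e] := @Rexp_sum _ (fun i t => \sum_j c i j * F i j t) (fun i => (H1 i).1).
split => //; rewrite e; apply: eq_bigr => i _; exact: (H1 i).2.
Qed.

Lemma lin_sum (n : nat) (c : 'I_n -> R) (F : 'I_n -> T -> R) :
  (forall i, L1 (F i)) ->
  L1 (fun t => \sum_i c i * F i t) /\
  Rexp (fun t => \sum_i c i * F i t) = \sum_i c i * Rexp (F i).
Proof.
move=> HF.
have [h e] := @Rexp_sum _ (fun i t => c i * F i t) (fun i => @L1Z (c i) _ (HF i)).
split => //; rewrite e; apply: eq_bigr => i _; exact: RexpZ.
Qed.

End L.

Section GCN.
Context {R : realType} {d : measure_display} {T : measurableType d}
  (P : probability T R) (n : nat) (X0 X1 : T -> 'cV[R]_n).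
Hypotheses (mX0 : rvec X0) (mX1 : rvec X1) (LX0 : L2vec P X0) (LX1 : L2vec P X1)
  (ind : indep_vec P X0 X1).

Let x0 i := fun t => X0 t i ord0.
Let x1 i := fun t => X1 t i ord0.
Let mu0 := Evec P X0.
Let mu1 := Evec P X1.
Let y0 i := fun t => x0 i t - mu0 i ord0.
Let y1 i := fun t => x1 i t - mu1 i ord0.

Let x0L2 i : x0 i \in Lfun P 2%:E. Proof. apply: L2_Lfun; [exact: mX0 | exact: LX0]. Qed.
Let x1L2 i : x1 i \in Lfun P 2%:E. Proof. apply: L2_Lfun; [exact: mX1 | exact: LX1]. Qed.
Let y0L2 i : y0 i \in Lfun P 2%:E. Proof. exact: L2_sub (x0L2 i) (Lfun_cst _ _ _). Qed.
Let y1L2 i : y1 i \in Lfun P 2%:E. Proof. exact: L2_sub (x1L2 i) (Lfun_cst _ _ _). Qed.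
Let fin1 : P [set: T] \is a fin_num. Proof. by rewrite probability_setT. Qed.
Let x0L1 i : L1 P (x0 i). Proof. exact: Lfun_subset12. Qed.
Let x1L1 i : L1 P (x1 i). Proof. exact: Lfun_subset12. Qed.
Let L00 i j : L1 P (fun t => y0 i t * y0 j t). Proof. exact: Lfun2_mul_Lfun1. Qed.
Let L01 i j : L1 P (fun t => y0 i t * y1 j t). Proof. exact: Lfun2_mul_Lfun1. Qed.
Let L11 i j : L1 P (fun t => y1 i t * y1 j t). Proof. exact: Lfun2_mul_Lfun1. Qed.

Lemma C01 i j : Rexp P (fun t => y0 i t * y1 j t) = 0.
Proof.
have indij : forall A B, measurable A -> measurable B ->
    P (x0 i @^-1` A `&` x1 j @^-1` B) = (P (x0 i @^-1` A) * P (x1 j @^-1` B))%E.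
  move=> A B mA mB.
  pose A' := fun l => if l == i then A else setT.
  pose B' := fun l => if l == j then B else setT.
  have eA : [set t | forall l, A' l (X0 t l ord0)] = x0 i @^-1` A.
    apply/seteqP; split => t /=.
    - by move/(_ i); rewrite /A' eqxx.
    - by move=> h l; rewrite /A'; case: eqP => [->|].
  have eB : [set t | forall l, B' l (X1 t l ord0)] = x1 j @^-1` B.
    apply/seteqP; split => t /=.
    - by move/(_ j); rewrite /B' eqxx.
    - by move=> h l; rewrite /B'; case: eqP => [->|].
  rewrite -eA -eB; apply: ind => l; [rewrite /A' | rewrite /B']; case: eqP => _ //.
have L01' := Lfun2_mul_Lfun1 (x0L2 i) (x1L2 j).
have E := indep_mul (mX0 i) (mX1 j) indij ((Lfun1_integrable _ _).1 (x0L1 i))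
  ((Lfun1_integrable _ _).1 (x1L1 j)) ((Lfun1_integrable _ _).1 L01').
have E' : expectation P (x0 i * x1 j)%R = (expectation P (x0 i) * expectation P (x1 j))%E.
  by rewrite !unlock; exact: E.
have cov : covariance P (x0 i) (x1 j) = expectation P (fun t => y0 i t * y1 j t).
  rewrite covariance.unlock; congr expectation; apply/funext => t.
  by rewrite /y0 /y1 /mu0 /mu1 /Evec !mxE.
rewrite /Rexp -cov covarianceE //.
have h : forall a b : \bar R, b \is a fin_num -> a = b -> fine (a - b)%E = 0.
  by move=> a b fb ->; rewrite subee.
apply: h.
- by apply: fin_numM; apply: expectation_fin_num; [exact: x0L1 | exact: x1L1].
- by rewrite !unlock; exact: E.
- exact: x0L1.
- exact: x1L1.
Qed.

Lemma Evec_lin k (A0 A1 : 'M[R]_(k, n)) :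
  Evec P (fun t => A0 *m X0 t + A1 *m X1 t) = A0 *m mu0 + A1 *m mu1.
Proof.
apply/matrixP => l j; rewrite (ord1 j) !mxE.
have [h0 e0] := lin_sum (fun i => A0 l i) x0L1.
have [h1 e1] := lin_sum (fun i => A1 l i) x1L1.
rewrite (_ : fine _ = Rexp P (fun t => (fun t => \sum_i A0 l i * x0 i t) t +
    (fun t => \sum_i A1 l i * x1 i t) t)); last first.
  by rewrite /Rexp; congr (fine (expectation P _)); apply/funext => t; rewrite !mxE.
rewrite RexpD // e0 e1.
by congr (_ + _); apply: eq_bigr => i _; rewrite /mu0 /mu1 /Evec !mxE.
Qed.

Definition qf k (A : 'M[R]_(k, n)) (C : 'I_n -> 'I_n -> R) :=
  \sum_l \sum_i \sum_j A l i * A l j * C i j.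
Definition C0 i j := Rexp P (fun t => y0 i t * y0 j t).
Definition C1 i j := Rexp P (fun t => y1 i t * y1 j t).

Lemma var_lin k (A0 A1 : 'M[R]_(k, n)) :
  var_norm P (fun t => A0 *m X0 t + A1 *m X1 t) = qf A0 C0 + qf A1 C1.
Proof.
rewrite /var_norm Evec_lin.
pose S00 l := fun t => \sum_i \sum_j (A0 l i * A0 l j) * (y0 i t * y0 j t).
pose S01 l := fun t => \sum_i \sum_j (A0 l i * A1 l j) * (y0 i t * y1 j t).
pose S11 l := fun t => \sum_i \sum_j (A1 l i * A1 l j) * (y1 i t * y1 j t).
have e : (fun t => enorm (A0 *m X0 t + A1 *m X1 t - (A0 *m mu0 + A1 *m mu1)) ^+ 2) =
   (fun t => \sum_l (S00 l t + 2 * S01 l t + S11 l t)).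
  apply/funext => t; rewrite /enorm sqr_sqrtr; last first.
    by apply: sumr_ge0 => l _; exact: sqr_ge0.
  apply: eq_bigr => l _.
  have -> : (A0 *m X0 t + A1 *m X1 t - (A0 *m mu0 + A1 *m mu1)) l ord0 =
      \sum_i A0 l i * y0 i t + \sum_i A1 l i * y1 i t.
    rewrite !mxE /y0 /y1 /x0 /x1.
    under [in RHS]eq_bigr do rewrite mulrBr.
    under [X in _ = _ + X]eq_bigr do rewrite mulrBr.
    rewrite !sumrB; ring.
  set a := \sum_i _; set b := \sum_i _.
  have ha : a ^+ 2 = S00 l t.
    rewrite expr2 /a mulr_suml; apply: eq_bigr => i _; rewrite mulr_sumr.
    by apply: eq_bigr => j _; ring.
  have hb : b ^+ 2 = S11 l t.
    rewrite expr2 /b mulr_suml; apply: eq_bigr => i _; rewrite mulr_sumr.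
    by apply: eq_bigr => j _; ring.
  have hab : a * b = S01 l t.
    rewrite /a /b mulr_suml; apply: eq_bigr => i _; rewrite mulr_sumr.
    by apply: eq_bigr => j _; ring.
  rewrite sqrrD ha hb hab; ring.
rewrite e.
have H l : L1 P (fun t => S00 l t + 2 * S01 l t + S11 l t) /\
    Rexp P (fun t => S00 l t + 2 * S01 l t + S11 l t) =
    \sum_i \sum_j A0 l i * A0 l j * C0 i j + \sum_i \sum_j A1 l i * A1 l j * C1 i j.
  have [h00 e00] := Rexp_dsum (fun i j => A0 l i * A0 l j) L00.
  have [h01 e01] := Rexp_dsum (fun i j => A0 l i * A1 l j) L01.
  have [h11 e11] := Rexp_dsum (fun i j => A1 l i * A1 l j) L11.
  have h01' := L1Z 2 h01.
  split; first by apply: L1D => //; apply: L1D.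
  rewrite RexpD //; last by apply: L1D.
  rewrite RexpD // RexpZ //.
  rewrite /S00 /S01 /S11 e00 e01 e11.
  rewrite [X in 2 * X]big1 ?mulr0 ?addr0 //.
  by move=> i _; rewrite big1 // => j _; rewrite C01 mulr0.
have [hs es] := Rexp_sum (fun l => (H l).1).
change (Rexp P (fun t => \sum_l (S00 l t + 2 * S01 l t + S11 l t)) = qf A0 C0 + qf A1 C1).
rewrite es /qf -big_split /=; apply: eq_bigr => l _; exact: (H l).2.
Qed.

Lemma qfZ k c (A : 'M[R]_(k, n)) C : qf (c *: A) C = c ^+ 2 * qf A C.
Proof.
rewrite /qf mulr_sumr; apply: eq_bigr => l _; rewrite mulr_sumr.
apply: eq_bigr => i _; rewrite mulr_sumr; apply: eq_bigr => j _.
rewrite !mxE; ring.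
Qed.

Lemma enormZ k c (v : 'cV[R]_k) : enorm (c *: v) = `|c| * enorm v.
Proof.
rewrite /enorm; under eq_bigr do rewrite mxE exprMn.
by rewrite -mulr_sumr sqrtrM ?sqr_ge0 // sqrtr_sqr.
Qed.

Lemma final k (W : 'M[R]_(k, n)) :
  0 < var_norm P (fun t => W *m X0 t) ->
  0 < var_norm P (fun t => W *m X1 t) ->
  forall A : R, exists2 delta : R, 0 < delta &
    forall P0 P1 : R, 0 <= P0 <= 1 -> 0 <= P1 <= 1 ->
      0 < `|P0 + P1 - 1| < delta ->
      (A%:E < complexity P W X0 X1 P0 P1)%E.
Proof.
have eW0 : var_norm P (fun t => W *m X0 t) = qf W C0.
  rewrite (_ : (fun t => W *m X0 t) = fun t => W *m X0 t + (0 : R) *: W *m X1 t); last first.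
    by apply/funext => t; rewrite scale0r mul0mx addr0.
  by rewrite var_lin qfZ expr0n /= mul0r addr0.
have eW1 : var_norm P (fun t => W *m X1 t) = qf W C1.
  rewrite (_ : (fun t => W *m X1 t) = fun t => (0 : R) *: W *m X0 t + W *m X1 t); last first.
    by apply/funext => t; rewrite scale0r mul0mx add0r.
  by rewrite var_lin qfZ expr0n /= mul0r add0r.
rewrite eW0 eW1 => s0p s1p A.
set s0 := qf W C0 in s0p *; set s1 := qf W C1 in s1p *.
set mm := s0 * s1 / (s0 + s1).
have mmp : 0 < mm by rewrite /mm divr_gt0 ?mulr_gt0 ?addr_gt0.
set c := Num.sqrt mm.
have cp : 0 < c by rewrite sqrtr_gt0.
set K := enorm (W *m (mu0 - mu1)).
have Kge0 : 0 <= K by rewrite /K /enorm sqrtr_ge0.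
exists (c / ((`|A| + 1) * (K + 1))).
  by rewrite divr_gt0 // mulr_gt0 // ltr_pwDr // ?ltr01 ?lerDl //; lra.
move=> P0 P1 _ _ /andP[eps0 epsd].
have eO0 : O0 W X0 X1 P0 = fun t => (P0 *: W) *m X0 t + ((1 - P0) *: W) *m X1 t.
  by apply/funext => t; rewrite /O0 mulmxDr -!scalemxAr -!scalemxAl.
have eO1 : O1 W X0 X1 P1 = fun t => ((1 - P1) *: W) *m X0 t + (P1 *: W) *m X1 t.
  by apply/funext => t; rewrite /O1 mulmxDr addrC -!scalemxAr -!scalemxAl.
have hV : forall a, mm <= a ^+ 2 * s0 + (1 - a) ^+ 2 * s1.
  move=> a; rewrite /mm ler_pdivrMr ?addr_gt0 //.
  have := sqr_ge0 (a * s0 - (1 - a) * s1); nra.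
rewrite /complexity /=.
rewrite eO0 eO1 /M01 !Evec_lin.
have -> : P0 *: W *m mu0 + (1 - P0) *: W *m mu1 - ((1 - P1) *: W *m mu0 + P1 *: W *m mu1)
    = (P0 + P1 - 1) *: (W *m (mu0 - mu1)).
  rewrite -!scalemxAl mulmxBr; apply/matrixP => i j; rewrite !mxE; ring.
rewrite enormZ -/K.
case: ifPn => [_|M0]; first exact: ltry.
rewrite lte_fin /S_c !var_lin !qfZ -/s0 -/s1.
set S0 := Num.sqrt _; set S1 := Num.sqrt _.
have cS0 : c <= S0.
  rewrite ler_sqrt ?hV //; apply: le_trans (hV P0); exact: ltW.
have S1ge0 : 0 <= S1 by rewrite sqrtr_ge0.
have Mp : 0 < `|P0 + P1 - 1| * K.
  rewrite lt_neqAle eq_sym M0 /=; exact: mulr_ge0.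
have Kp : 0 < K.
  by rewrite lt_neqAle Kge0 andbT; apply/eqP => K0; move: Mp; rewrite -K0 mulr0 ltxx.
rewrite ltr_pdivlMr //.
have Aa : A <= `|A| by exact: ler_norm.
have Ag : 0 <= `|A| by [].
have hd : 0 < (`|A| + 1) * (K + 1) by apply: mulr_gt0; lra.
move: epsd; rewrite ltr_pdivlMr // => epsd.
nra.
Qed.

End GCN.

Local Close Scope classical_set_scope.

Theorem theorem1 (R : realType) (d : measure_display) (T : measurableType d)
  (P : probability T R) (iota k : nat) (X0 X1 : T -> 'cV[R]_iota) (W : 'M[R]_(k, iota)) :
  rvec X0 -> rvec X1 -> L2vec P X0 -> L2vec P X1 -> indep_vec P X0 X1 ->
  W != 0 ->
  0 < var_norm P (fun t => W *m X0 t) ->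
  0 < var_norm P (fun t => W *m X1 t) ->
  forall A : R, exists2 delta : R, 0 < delta &
    forall P0 P1 : R, 0 <= P0 <= 1 -> 0 <= P1 <= 1 ->
      0 < `|P0 + P1 - 1| < delta ->
      (A%:E < complexity P W X0 X1 P0 P1)%E.
Proof.
move=> mX0 mX1 LX0 LX1 ind _ h0 h1.
exact: (final mX0 mX1 LX0 LX1 ind h0 h1).
Qed.
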